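(* Let $n\ge 2$ and let $x\in\mathbb{C}^{n\times n}$ be generic (in the sense defined in the context). Fix $1\le m\le n-1$, let $\Lambda_m=\operatorname{diag}(\mu^{(m)}_1,\ldots,\mu^{(m)}_m)$ be a diagonal matrix whose diagonal entries are the eigenvalues of $x_m$ in some fixed order, let $g_m\in\mathrm{GL}(m)$ be the unique matrix with $x_m=g_m\Lambda_m g_m^{-1}$ whose last row consists entirely of ones, and define $b_m,c_m\in\mathbb{C}^m$ and $\delta_{m+1}\in\mathbb{C}$ by \[ \begin{pmatrix} g_m^{-1}&0\\0&1\end{pmatrix} x_{m+1}\begin{pmatrix} g_m&0\\0&1\end{pmatrix}=\begin{pmatrix}\Lambda_m & c_m\\ b_m^{T} & \delta_{m+1}\end{pmatrix}. \] Let $P_k(\lambda)=\det(\lambda I_k-x_k)$. Then \[ \operatorname{diag}(b_m)\operatorname{diag}(c_m)=-P_{m+1}(\Lambda_m)\bigl(P_m'(\Lambda_m)\bigr)^{-1}. \] In particular $\operatorname{diag}(b_m)\operatorname{diag}(c_m)$ is invertible.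
   Context: For a square matrix $x$, $x_k$ denotes its leading principal $k\times k$ submatrix and $E(x_k)$ the multiset of its eigenvalues. A matrix $x\in\mathbb{C}^{n\times n}$ is called generic if (G1) for every $1\le k\le n$ the eigenvalues of $x_k$ are distinct, and (G2) for every $1\le k\le n-1$, $E(x_k)\cap E(x_{k+1})=\varnothing$. Under these conditions $x_m$ is diagonalizable and every eigenvector of $x_m$ has nonzero last entry, so the normalized $g_m$ (last row all ones) exists and is unique. For $v\in\mathbb{C}^m$, $\operatorname{diag}(v)$ is the diagonal matrix with diagonal $v$; for a polynomial $P$ and diagonal $\Lambda_m$, $P(\Lambda_m)$ is the diagonal matrix with entries $P(\mu^{(m)}_i)$. *)

(* Defs.v *)
From HB Require Import structures.
From mathcomp Require Import all_boot all_order all_algebra.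
Set Implicit Arguments. Unset Strict Implicit. Unset Printing Implicit Defensive.
Import Order.TTheory GRing.Theory Num.Theory.
Local Open Scope ring_scope.

(* Leading principal k x k submatrix x_k of x : 'M_n (meaningful for k <= n). *)
Definition lpm (C : fieldType) (n k : nat) (x : 'M[C]_n) : 'M[C]_k :=
  \matrix_(i < k, j < k)
    match @insub nat (fun t => (t < n)%N) 'I_n (val i),
          @insub nat (fun t => (t < n)%N) 'I_n (val j) with
    | Some i', Some j' => x i' j'
    | _, _ => 0
    end.

Definition distinct_eigs (C : fieldType) (k : nat) (A : 'M[C]_k) : Prop :=
  exists s : seq C, uniq s /\ char_poly A = \prod_(a <- s) ('X - a%:P).

Definition generic (C : fieldType) (n : nat) (x : 'M[C]_n) : Prop :=
  (forall k, (1 <= k <= n)%N -> distinct_eigs (lpm k x)) /\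
  (forall k, (1 <= k <= n.-1)%N ->
     forall a : C, eigenvalue (lpm k x) a -> ~~ eigenvalue (lpm k.+1 x) a).

(* Main.v *)
Require Import Defs.
From HB Require Import structures.
From mathcomp Require Import all_boot all_order all_algebra.
Set Implicit Arguments. Unset Strict Implicit. Unset Printing Implicit Defensive.
Import Order.TTheory GRing.Theory Num.Theory.
Local Open Scope ring_scope.

Lemma det_arrow (R : comNzRingType) m (d : 'rV[R]_m) (u : 'cV[R]_m) (v : 'rV[R]_m) (e : 'M[R]_1) :
  (\prod_i d 0 i) * \det (block_mx (diag_mx d) u v e) =
  (\prod_i d 0 i) * ((\prod_i d 0 i) * e 0 0
      - \sum_i v 0 i * u i 0 * \prod_(j | j != i) d 0 j).
Proof.
set p := \prod_i d 0 i.
set d' := \row_i \prod_(j | j != i) d 0 j.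
have hD : diag_mx d' *m diag_mx d = p%:M.
  apply/matrixP => i j; rewrite mul_mx_diag !mxE.
  case: (eqVneq i j) => [->|nij]; last by rewrite mul0r.
  by rewrite mulr1n /p [in RHS](bigD1 j) //= mulrC.
set L := block_mx 1%:M 0 (- (v *m diag_mx d')) (p%:M : 'M[R]_1).
have hL : \det L = p by rewrite det_lblock det1 det_scalar1 mul1r.
rewrite -{1}hL -det_mulmx /L mulmx_block !mul1mx !mul0mx !addr0 ?add0r.
rewrite mulNmx -mulmxA hD -scalar_mxC mul_mx_scalar mul_scalar_mx addNr.
rewrite det_ublock det_diag det_mx11 -/p; congr (_ * _).
rewrite !mxE addrC -sumrN; congr (_ + _).
apply: eq_bigr => i _; rewrite !mxE (bigD1 i) //= big1 ?addr0.
  by rewrite !mxE eqxx mulr1n mulNr mulrAC.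
by move=> j nji; rewrite !mxE (negbTE nji) mulr0n mulr0.
Qed.

Lemma char_poly_sim (R : comNzRingType) k (P Q A : 'M[R]_k) :
  P *m Q = 1%:M -> char_poly (P *m A *m Q) = char_poly A.
Proof.
move=> hPQ; rewrite /char_poly /char_poly_mx !map_mxM.
have hm : map_mx polyC P *m map_mx polyC Q = 1%:M by rewrite -map_mxM hPQ map_mx1.
have e : ('X%:M : 'M[{poly R}]_k) = map_mx polyC P *m 'X%:M *m map_mx polyC Q.
  by rewrite scalar_mxC -mulmxA hm mulmx1.
rewrite {1}e -mulmxBl -mulmxBr !det_mulmx mulrAC -det_mulmx hm det1 mul1r.
by [].

Qed.

Theorem mainTheorem1 (C : numClosedFieldType) (n : nat) (x : 'M[C]_n)
  (m : nat) (mu : 'rV[C]_m) (g : 'M[C]_m) (b c : 'cV[C]_m) (delta : C) :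
  (2 <= n)%N -> generic x -> (1 <= m)%N -> (m <= n.-1)%N ->
  char_poly (lpm m x) = \prod_(i < m) ('X - (mu 0 i)%:P) ->
  g \in unitmx ->
  lpm m x = g *m diag_mx mu *m invmx g ->
  (forall i j : 'I_m, val i = m.-1 -> g i j = 1) ->
  block_mx (invmx g) 0 0 (1%:M : 'M[C]_1) *m lpm (m + 1) x
    *m block_mx g 0 0 (1%:M : 'M[C]_1)
  = block_mx (diag_mx mu) c b^T (delta%:M : 'M[C]_1) ->
  diag_mx b^T *m diag_mx c^T
  = - (diag_mx (\row_i (char_poly (lpm (m + 1) x)).[mu 0 i])
       *m invmx (diag_mx (\row_i ((char_poly (lpm m x))^`()).[mu 0 i])))
  /\ diag_mx b^T *m diag_mx c^T \in unitmx.
Proof.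
move=> n2 [G1 G2] m1 mn hP gu hg hlast hB.
set Pp := \prod_(i < m) ('X - (mu 0 i)%:P).
set Q := fun i : 'I_m => \prod_(j | j != i) (mu 0 i - mu 0 j).
have hPM : char_poly (lpm (m + 1) x)
    = char_poly (block_mx (diag_mx mu) c b^T (delta%:M : 'M[C]_1)).
  rewrite -hB char_poly_sim // mulmx_block !mul0mx !mulmx0 !addr0 add0r mulVmx //.
  by rewrite mul1mx (scalar_mx_block m 1).
have Pp0 : Pp != 0 by rewrite monic_neq0 // monic_prod_XsubC.
have key : char_poly (block_mx (diag_mx mu) c b^T (delta%:M : 'M[C]_1))
   = Pp * ('X - delta%:P) - \sum_i (b i 0 * c i 0)%:P * \prod_(j | j != i) ('X - (mu 0 j)%:P).
  apply: (mulfI Pp0); rewrite /char_poly.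
  have -> : char_poly_mx (block_mx (diag_mx mu) c b^T (delta%:M : 'M[C]_1)) =
     block_mx (diag_mx (\row_i ('X - (mu 0 i)%:P))) (- map_mx polyC c)
        (- map_mx polyC b^T) (('X - delta%:P)%:M : 'M_1).
    rewrite /char_poly_mx map_block_mx (scalar_mx_block m 1) opp_block_mx add_block_mx.
    congr block_mx; try by rewrite sub0r.
      apply/matrixP => i j; rewrite !mxE; case: (i == j);
        by rewrite ?mulr1n ?mulr0n ?subr0.
    by apply/matrixP => i j; rewrite !mxE !ord1 eqxx !mulr1n.
  have hd : \prod_i (\row_i ('X - (mu 0 i)%:P)) 0 i = Pp by apply: eq_bigr => i _; rewrite mxE.
  rewrite -{1}hd det_arrow hd; congr (_ * (_ - _)).
    by rewrite mxE mulr1n.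
  apply: eq_bigr => i _; rewrite !mxE mulrNN -polyCM; congr (_ * _).
  by apply: eq_bigr => j _; rewrite mxE.
have hmu : injective (fun i : 'I_m => mu 0 i).
  have hmn : (1 <= m <= n)%N by rewrite m1 (leq_trans mn) // leq_pred.
  have [s [us hs]] := G1 m hmn.
  rewrite hP in hs.
  have hperm : perm_eq [seq mu 0 i | i <- enum 'I_m] s.
    by apply: prod_XsubC_eq; rewrite big_map big_enum /=.
  apply/injectiveP; rewrite /injectiveb /dinjectiveb.
  by rewrite (perm_uniq hperm).
have hQ : forall i, Q i != 0.
  move=> i; apply/prodf_neq0 => j nji; rewrite subr_eq0.
  by apply/eqP => /hmu eij; rewrite eij eqxx in nji.
have hder : forall i, ((char_poly (lpm m x))^`()).[mu 0 i] = Q i.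
  move=> i; rewrite hP (bigD1 i) //= derivM derivXsubC mul1r hornerD hornerM.
  rewrite hornerXsubC subrr mul0r addr0 horner_prod.
  by apply: eq_bigr => j _; rewrite hornerXsubC.
have heval : forall i, (char_poly (lpm (m + 1) x)).[mu 0 i] = - (b i 0 * c i 0 * Q i).
  move=> i; rewrite hPM key hornerD hornerN hornerM.
  have -> : Pp.[mu 0 i] = 0.
    by rewrite /Pp horner_prod (bigD1 i) //= hornerXsubC subrr mul0r.
  rewrite mul0r sub0r horner_sum  (bigD1 i) //= [X in _ + X]big1 ?addr0.
    rewrite hornerM hornerC horner_prod; congr (- (_ * _)).
    by apply: eq_bigr => j _; rewrite hornerXsubC.
  move=> j nji; rewrite hornerM horner_prod (bigD1 i) /=; last by rewrite eq_sym.
  by rewrite hornerXsubC subrr mul0r mulr0.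
have hnz : forall i, (char_poly (lpm (m + 1) x)).[mu 0 i] != 0.
  move=> i; have := G2 m (introT andP (conj m1 mn)) (mu 0 i).
  rewrite !eigenvalue_root_char addn1 => H; apply: H.
  by rewrite /root hP horner_prod (bigD1 i) //= hornerXsubC subrr mul0r.
have hbc : forall i, b i 0 * c i 0 != 0.
  by move=> i; apply/eqP => e; move: (hnz i); rewrite heval e mul0r oppr0 eqxx.
set D2 := diag_mx (\row_i ((char_poly (lpm m x))^`()).[mu 0 i]).
have D2u : D2 \in unitmx.
  rewrite unitmxE det_diag unitfE; apply/prodf_neq0 => i _.
  by rewrite mxE hder.
split.
  rewrite -mulNmx -[LHS](mulmxK D2u); congr (_ *m _).
  apply/matrixP => i j; rewrite !mul_mx_diag !mxE.
  case: (eqVneq i j) => [<-|nij].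
    by rewrite ?eqxx /= !mulr1n hder heval opprK.
  by rewrite /= !mulr0n !mul0r oppr0.
rewrite unitmxE det_mulmx !det_diag unitfE -big_split /=; apply/prodf_neq0 => i _.
by rewrite !mxE.
Qed.
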